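(* Let $\mathbb{T}^*_{\mathsf{ctl}} = \mathsf{src}!b_1(\mathtt{unit}).\mathsf{src}!b_2(\mathtt{unit}).\mu\mathbf{t}.\,\mathsf{src}?b_1(\mathtt{unit}).\mathsf{sk}?b_1(\mathtt{unit}).\mathsf{sk}!b_1(\mathtt{unit}).\mathsf{src}!b_1(\mathtt{unit}).\mathsf{src}?b_2(\mathtt{unit}).\mathsf{sk}?b_2(\mathtt{unit}).\mathsf{sk}!b_2(\mathtt{unit}).\mathsf{src}!b_2(\mathtt{unit}).\mathbf{t}$ and $\mathbb{T}_{\mathsf{ctl}} = \mu\mathbf{t}.\,\mathsf{src}!b_1(\mathtt{unit}).\mathsf{src}?b_1(\mathtt{unit}).\mathsf{sk}?b_1(\mathtt{unit}).\mathsf{sk}!b_1(\mathtt{unit}).\mathsf{src}!b_2(\mathtt{unit}).\mathsf{src}?b_2(\mathtt{unit}).\mathsf{sk}?b_2(\mathtt{unit}).\mathsf{sk}!b_2(\mathtt{unit}).\mathbf{t}$, where $\mathsf{src}$ and $\mathsf{sk}$ are distinct participants and $b_1,b_2$ are labels. Then $\mathbb{T}^*_{\mathsf{ctl}}\leqslant\mathbb{T}_{\mathsf{ctl}}$.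
   Context: Sorts: $\mathsf{S} ::= \mathtt{nat} \mid \mathtt{int} \mid \mathtt{bool} \mid \mathtt{unit}$; subsorting $\leq:$ is the least reflexive relation with $\mathtt{nat}\leq:\mathtt{int}$. Session types: $\mathbb{T} ::= \&_{i\in I}\mathsf{p}?\ell_i(\mathsf{S}_i).\mathbb{T}_i \mid \oplus_{i\in I}\mathsf{p}!\ell_i(\mathsf{S}_i).\mathbb{T}_i \mid \mathtt{end} \mid \mu\mathbf{t}.\mathbb{T} \mid \mathbf{t}$ (singleton choices written without $\&/\oplus$; $?$ is input from, $!$ is output to the named participant). Session trees: possibly infinite terms $\mathsf{T} ::= \mathtt{end} \mid \&_{i\in I}\mathsf{p}?\ell_i(\mathsf{S}_i).\mathsf{T}_i \mid \oplus_{i\in I}\mathsf{p}!\ell_i(\mathsf{S}_i).\mathsf{T}_i$ (coinductively); $\mathcal{T}(\mathbb{T})$ is the tree obtained from a closed type by unfolding recursion. SISO trees: $\mathsf{W} ::= \mathtt{end} \mid \mathsf{p}?\ell(\mathsf{S}).\mathsf{W} \mid \mathsf{p}!\ell(\mathsf{S}).\mathsf{W}$; $\mathrm{act}(\mathsf{W})$ is the set of symbols $\mathsf{p}?$/$\mathsf{p}!$ of inputs/outputs occurring in $\mathsf{W}$. $\mathcal{A}^{(\mathsf{p})}$: nonempty finite sequences of inputs $\mathsf{q}?\ell(\mathsf{S})$, $\mathsf{q}\neq\mathsf{p}$; $\mathcal{B}^{(\mathsf{p})}$: nonempty finite sequences of inputs $\mathsf{r}?\ell(\mathsf{S})$ (any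 $\mathsf{r}$) and outputs $\mathsf{q}!\ell(\mathsf{S})$, $\mathsf{q}\neq\mathsf{p}$ (used as prefixes). SISO refinement $\lesssim$: largest relation closed backward under $\mathsf{p}?\ell(\mathsf{S}).\mathsf{W}\lesssim\mathsf{p}?\ell(\mathsf{S}').\mathsf{W}'$ if $\mathsf{S}'\leq:\mathsf{S}$, $\mathsf{W}\lesssim\mathsf{W}'$; $\mathsf{p}?\ell(\mathsf{S}).\mathsf{W}\lesssim\mathcal{A}^{(\mathsf{p})}.\mathsf{p}?\ell(\mathsf{S}').\mathsf{W}'$ if $\mathsf{S}'\leq:\mathsf{S}$, $\mathsf{W}\lesssim\mathcal{A}^{(\mathsf{p})}.\mathsf{W}'$, $\mathrm{act}(\mathsf{W})=\mathrm{act}(\mathcal{A}^{(\mathsf{p})}.\mathsf{W}')$; $\mathsf{p}!\ell(\mathsf{S}).\mathsf{W}\lesssim\mathsf{p}!\ell(\mathsf{S}').\mathsf{W}'$ if $\mathsf{S}\leq:\mathsf{S}'$, $\mathsf{W}\lesssim\mathsf{W}'$; $\mathsf{p}!\ell(\mathsf{S}).\mathsf{W}\lesssim\mathcal{B}^{(\mathsf{p})}.\mathsf{p}!\ell(\mathsf{S}').\mathsf{W}'$ if $\mathsf{S}\leq:\mathsf{S}'$, $\mathsf{W}\lesssim\mathcal{B}^{(\mathsf{p})}.\mathsf{W}'$, $\mathrm{act}(\mathsf{W})=\mathrm{act}(\mathcal{B}^{(\mathsf{p})}.\mathsf{W}')$; $\mathtt{end}\lesssim\mathtt{end}$. SO trees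 $\mathsf{U} ::= \mathtt{end}\mid\&_{i\in I}\mathsf{p}?\ell_i(\mathsf{S}_i).\mathsf{U}_i\mid\mathsf{p}!\ell(\mathsf{S}).\mathsf{U}$, SI trees $\mathsf{V} ::= \mathtt{end}\mid\mathsf{p}?\ell(\mathsf{S}).\mathsf{V}\mid\oplus_{i\in I}\mathsf{p}!\ell_i(\mathsf{S}_i).\mathsf{V}_i$; $[\![\mathsf{T}]\!]_{SO}$ is the set of SO trees obtained from $\mathsf{T}$ by keeping exactly one branch (with its payload) at every selection node and all branches at branching nodes, and $[\![\mathsf{T}]\!]_{SI}$ the set of SI trees obtained by keeping exactly one branch at every branching node and all branches at selection nodes. Subtyping: $\mathsf{T}\leqslant\mathsf{T}'$ iff $\forall\mathsf{U}\in[\![\mathsf{T}]\!]_{SO}\ \forall\mathsf{V}'\in[\![\mathsf{T}']\!]_{SI}\ \exists\mathsf{W}\in[\![\mathsf{U}]\!]_{SI}\ \exists\mathsf{W}'\in[\![\mathsf{V}']\!]_{SO}$: $\mathsf{W}\lesssim\mathsf{W}'$; $\mathbb{T}\leqslant\mathbb{T}'$ iff $\mathcal{T}(\mathbb{T})\leqslant\mathcal{T}(\mathbb{T}')$. *)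

(* Defs.v *)
From Stdlib Require Import List.
Import ListNotations.
Set Implicit Arguments.

Inductive sort : Type := SNat | SInt | SBool | SUnit.

Definition subsort (s s' : sort) : Prop := s = s' \/ (s = SNat /\ s' = SInt).

Section SessionTheory.
Variables (P L : Type). (* participants and labels *)

Inductive stype : Type :=
| SEnd : stype
| SVar : nat -> stype
| SMu : nat -> stype -> stype
| SBra : P -> list (L * sort * stype) -> stype   (* &_{i} p?l_i(S_i).T_i *)
| SSel : P -> list (L * sort * stype) -> stype.  (* +_{i} p!l_i(S_i).T_i *)

(* Substitution of a (closed) type S for variable x. *)
Fixpoint subst (x : nat) (S T : stype) : stype :=
  match T with
  | SEnd => SEnd
  | SVar y => if Nat.eqb y x then S else SVar y
  | SMu y T1 => if Nat.eqb y x then SMu y T1 else SMu y (subst x S T1)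
  | SBra p bs => SBra p (map (fun b => (fst b, subst x S (snd b))) bs)
  | SSel p bs => SSel p (map (fun b => (fst b, subst x S (snd b))) bs)
  end.

CoInductive tree : Type :=
| TEnd : tree
| TBra : P -> list (L * sort * tree) -> tree
| TSel : P -> list (L * sort * tree) -> tree.

Inductive unf : stype -> stype -> Prop :=
| unf_mu x T T' : unf (subst x (SMu x T) T) T' -> unf (SMu x T) T'
| unf_end : unf SEnd SEnd
| unf_bra p bs : unf (SBra p bs) (SBra p bs)
| unf_sel p bs : unf (SSel p bs) (SSel p bs).

CoInductive treeof : stype -> tree -> Prop :=
| to_end T : unf T SEnd -> treeof T TEnd
| to_bra T p bs ts : unf T (SBra p bs) ->
    Forall2 (fun b t => fst b = fst t /\ treeof (snd b) (snd t)) bs ts ->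
    treeof T (TBra p ts)
| to_sel T p bs ts : unf T (SSel p bs) ->
    Forall2 (fun b t => fst b = fst t /\ treeof (snd b) (snd t)) bs ts ->
    treeof T (TSel p ts).

CoInductive so_proj : tree -> tree -> Prop :=
| so_end : so_proj TEnd TEnd
| so_bra p bs us :
    Forall2 (fun b u => fst b = fst u /\ so_proj (snd b) (snd u)) bs us ->
    so_proj (TBra p bs) (TBra p us)
| so_sel p bs l s t u : In (l, s, t) bs -> so_proj t u ->
    so_proj (TSel p bs) (TSel p [(l, s, u)]).

CoInductive si_proj : tree -> tree -> Prop :=
| si_end : si_proj TEnd TEnd
| si_bra p bs l s t u : In (l, s, t) bs -> si_proj t u ->
    si_proj (TBra p bs) (TBra p [(l, s, u)])
| si_sel p bs us :
    Forall2 (fun b u => fst b = fst u /\ si_proj (snd b) (snd u)) bs us ->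
    si_proj (TSel p bs) (TSel p us).

Inductive action : Type :=
| AIn : P -> L -> sort -> action
| AOut : P -> L -> sort -> action.

Definition prefix1 (a : action) (t : tree) : tree :=
  match a with
  | AIn q l s => TBra q [(l, s, t)]
  | AOut q l s => TSel q [(l, s, t)]
  end.

Definition prepend (A : list action) (t : tree) : tree := fold_right prefix1 t A.

Definition is_A (p : P) (A : list action) : Prop :=
  A <> [] /\ Forall (fun a => exists q l s, a = AIn q l s /\ q <> p) A.

Definition is_B (p : P) (B : list action) : Prop :=
  B <> [] /\ Forall (fun a => (exists r l s, a = AIn r l s) \/
                              (exists q l s, a = AOut q l s /\ q <> p)) B.

(* act(W): symbols p? (true, p) and p! (false, p) occurring in W. *)
Inductive occurs (a : bool * P) : tree -> Prop :=
| oc_bra_here p bs : a = (true, p) -> occurs a (TBra p bs)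
| oc_sel_here p bs : a = (false, p) -> occurs a (TSel p bs)
| oc_bra_in p bs l s t : In (l, s, t) bs -> occurs a t -> occurs a (TBra p bs)
| oc_sel_in p bs l s t : In (l, s, t) bs -> occurs a t -> occurs a (TSel p bs).

Definition act_eq (W W' : tree) : Prop := forall a, occurs a W <-> occurs a W'.

CoInductive refine : tree -> tree -> Prop :=
| ref_in p l s W s' W' : subsort s' s -> refine W W' ->
    refine (TBra p [(l, s, W)]) (TBra p [(l, s', W')])
| ref_inA p l s W s' A W' : is_A p A -> subsort s' s ->
    refine W (prepend A W') -> act_eq W (prepend A W') ->
    refine (TBra p [(l, s, W)]) (prepend A (TBra p [(l, s', W')]))
| ref_out p l s W s' W' : subsort s s' -> refine W W' ->
    refine (TSel p [(l, s, W)]) (TSel p [(l, s', W')])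
| ref_outB p l s W s' B W' : is_B p B -> subsort s s' ->
    refine W (prepend B W') -> act_eq W (prepend B W') ->
    refine (TSel p [(l, s, W)]) (prepend B (TSel p [(l, s', W')]))
| ref_end : refine TEnd TEnd.

Definition tree_sub (T T' : tree) : Prop :=
  forall U, so_proj T U -> forall V', si_proj T' V' ->
  exists W W', si_proj U W /\ so_proj V' W' /\ refine W W'.

Definition stype_sub (T T' : stype) : Prop :=
  exists t t', treeof T t /\ treeof T' t' /\ tree_sub t t'.

End SessionTheory.

Arguments SEnd {P L}.

Definition inp {P L : Type} (p : P) (l : L) (k : stype P L) : stype P L :=
  SBra p [(l, SUnit, k)].
Definition out {P L : Type} (p : P) (l : L) (k : stype P L) : stype P L :=
  SSel p [(l, SUnit, k)].

Definition T_ctl_star {P L : Type} (src sk : P) (b1 b2 : L) : stype P L :=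
  out src b1 (out src b2 (SMu 0
    (inp src b1 (inp sk b1 (out sk b1 (out src b1
    (inp src b2 (inp sk b2 (out sk b2 (out src b2 (@SVar P L 0))))))))))).

Definition T_ctl {P L : Type} (src sk : P) (b1 b2 : L) : stype P L :=
  SMu 0 (out src b1 (inp src b1 (inp sk b1 (out sk b1
        (out src b2 (inp src b2 (inp sk b2 (out sk b2 (@SVar P L 0))))))))).

(* Main.v *)
Require Import Defs.
From Stdlib Require Import List.
Import ListNotations.

Section Proof.
Variables (P L : Type) (src sk : P) (b1 b2 : L).

Definition frob (t : tree P L) : tree P L :=
  match t with TBra p bs => TBra p bs | TSel p bs => TSel p bs | e => e end.
Lemma frob_eq t : t = frob t.
Proof. destruct t; reflexivity. Qed.

Definition i1 := AIn src b1 SUnit.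
Definition k1 := AIn sk b1 SUnit.
Definition p1 := AOut sk b1 SUnit.
Definition o1 := AOut src b1 SUnit.
Definition i2 := AIn src b2 SUnit.
Definition k2 := AIn sk b2 SUnit.
Definition p2 := AOut sk b2 SUnit.
Definition o2 := AOut src b2 SUnit.

CoFixpoint Xs : tree P L :=
  TBra src [(b1, SUnit, TBra sk [(b1, SUnit, TSel sk [(b1, SUnit, TSel src [(b1, SUnit,
  TBra src [(b2, SUnit, TBra sk [(b2, SUnit, TSel sk [(b2, SUnit, TSel src [(b2, SUnit,
  Xs)])])])])])])])].
CoFixpoint Ys : tree P L :=
  TSel src [(b1, SUnit, TBra src [(b1, SUnit, TBra sk [(b1, SUnit, TSel sk [(b1, SUnit,
  TSel src [(b2, SUnit, TBra src [(b2, SUnit, TBra sk [(b2, SUnit, TSel sk [(b2, SUnit,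
  Ys)])])])])])])])].
Definition tstar : tree P L := TSel src [(b1, SUnit, TSel src [(b2, SUnit, Xs)])].

Lemma Xs_unf : Xs = prepend [i1;k1;p1;o1;i2;k2;p2;o2] Xs.
Proof. rewrite (frob_eq Xs) at 1. reflexivity. Qed.
Lemma Ys_unf : Ys = prepend [o1;i1;k1;p1;o2;i2;k2;p2] Ys.
Proof. rewrite (frob_eq Ys) at 1. reflexivity. Qed.

CoInductive nice : tree P L -> Prop :=
| n_bra p l s t : (p = src \/ p = sk) -> nice t -> nice (TBra p [(l, s, t)])
| n_sel p l s t : (p = src \/ p = sk) -> nice t -> nice (TSel p [(l, s, t)]).

Ltac nice_tac := repeat (constructor; [first [left; reflexivity | right; reflexivity] |]).

Lemma nice_Xs : nice Xs.
Proof. cofix CIH. rewrite Xs_unf. simpl. nice_tac. exact CIH. Qed.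
Lemma nice_Ys : nice Ys.
Proof. cofix CIH. rewrite Ys_unf. simpl. nice_tac. exact CIH. Qed.
Lemma nice_tstar : nice tstar.
Proof. unfold tstar. nice_tac. exact nice_Xs. Qed.

Lemma so_si : forall t U, nice t -> so_proj t U -> si_proj U t.
Proof.
  cofix CIH. intros t U Hn Hs. destruct Hn as [p l s t' Hp Hn' | p l s t' Hp Hn'].
  - inversion Hs as [|? ? ? HF|]; subst.
    inversion HF as [|x y l1 l2 [E H3] HF2]; subst. inversion HF2; subst.
    destruct y as [[l' s'] u0]. simpl in E, H3.
    injection E; intros; subst.
    eapply si_bra; [left; reflexivity | apply CIH; assumption].
  - inversion Hs as [| |? ? l0 s0 t0 u0 HI HP]; subst. destruct HI as [E|[]]. injection E; intros; subst.
    apply si_sel. constructor; [split; [reflexivity | apply CIH; assumption] | constructor].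
Qed.

Lemma si_so : forall t V, nice t -> si_proj t V -> so_proj V t.
Proof.
  cofix CIH. intros t V Hn Hs. destruct Hn as [p l s t' Hp Hn' | p l s t' Hp Hn'].
  - inversion Hs as [|? ? l0 s0 t0 u0 HI HP|]; subst. destruct HI as [E|[]]. injection E; intros; subst.
    apply so_bra. constructor; [split; [reflexivity | apply CIH; assumption] | constructor].
  - inversion Hs as [| |? ? ? HF]; subst.
    inversion HF as [|x y l1 l2 [E H3] HF2]; subst. inversion HF2; subst.
    destruct y as [[l' s'] u0]. simpl in E, H3.
    injection E; intros; subst.
    eapply so_sel; [left; reflexivity | apply CIH; assumption].
Qed.

Lemma occ_nice a t : occurs a t -> nice t -> snd a = src \/ snd a = sk.
Proof.
  induction 1; intro Hn; inversion Hn; subst; simpl; auto.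
  - destruct H as [E|[]]. injection E; intros; subst. auto.
  - destruct H as [E|[]]. injection E; intros; subst. auto.
Qed.

Ltac occ := repeat first [ apply oc_bra_here; reflexivity | apply oc_sel_here; reflexivity
  | eapply oc_bra_in; [left; reflexivity|] | eapply oc_sel_in; [left; reflexivity|] ].

Lemma act_eq_full W W' : nice W -> nice W' ->
  (forall a, (snd a = src \/ snd a = sk) -> occurs a W) ->
  (forall a, (snd a = src \/ snd a = sk) -> occurs a W') -> act_eq W W'.
Proof.
  intros N N' H H' a; split; intro O.
  - apply H'. exact (@occ_nice a W O N).
  - apply H. exact (@occ_nice a W' O N').
Qed.

Lemma nice_prep l t : nice t ->
  Forall (fun a => match a with AIn q _ _ | AOut q _ _ => q = src \/ q = sk end) l ->
  nice (prepend l t).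
Proof.
  intros Ht Hl; induction Hl as [|a l Ha Hl IH]; simpl; auto.
  destruct a; constructor; auto.
Qed.

Lemma all_X l a : (snd a = src \/ snd a = sk) -> occurs a (prepend l Xs).
Proof.
  intro H. induction l as [|x l IH]; simpl.
  - destruct a as [[|] q]; simpl in H; destruct H as [->| ->]; rewrite Xs_unf; simpl; occ.
  - destruct x; simpl; eapply oc_bra_in || eapply oc_sel_in; solve [left; reflexivity | eauto].
Qed.

Lemma all_Y l a : (snd a = src \/ snd a = sk) -> occurs a (prepend l Ys).
Proof.
  intro H. induction l as [|x l IH]; simpl.
  - destruct a as [[|] q]; simpl in H; destruct H as [->| ->]; rewrite Ys_unf; simpl; occ.
  - destruct x; simpl; eapply oc_bra_in || eapply oc_sel_in; solve [left; reflexivity | eauto].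
Qed.

Ltac fa := repeat constructor; simpl; first [left; reflexivity | right; reflexivity].

Lemma isB (Hd : src <> sk) (b : L) : is_B src [AIn src b SUnit; AIn sk b SUnit; AOut sk b SUnit].
Proof.
  split; [discriminate|].
  constructor; [left; do 3 eexists; reflexivity|].
  constructor; [left; do 3 eexists; reflexivity|].
  constructor; [right; do 3 eexists; split; [reflexivity| intro E; apply Hd; symmetry; exact E]|].
  constructor.
Qed.

Lemma refS1 (Hd : src <> sk) : refine (prepend [o2] Xs) (prepend [i1;k1;p1;o2;i2;k2;p2] Ys).
Proof.
  cofix CIH.
  change (refine (TSel src [(b2, SUnit, Xs)])
     (prepend [i1;k1;p1] (TSel src [(b2, SUnit, prepend [i2;k2;p2] Ys)]))).
  apply ref_outB.
  - apply isB; exact Hd.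
  - left; reflexivity.
  - rewrite Xs_unf. simpl.
    apply ref_in; [left; reflexivity|].
    apply ref_in; [left; reflexivity|].
    apply ref_out; [left; reflexivity|].
    rewrite Ys_unf. simpl.
    change (refine (TSel src [(b1, SUnit, prepend [i2;k2;p2;o2] Xs)])
     (prepend [i2;k2;p2] (TSel src [(b1, SUnit, prepend [i1;k1;p1;o2;i2;k2;p2] Ys)]))).
    apply ref_outB.
    + apply isB; exact Hd.
    + left; reflexivity.
    + simpl.
      apply ref_in; [left; reflexivity|].
      apply ref_in; [left; reflexivity|].
      apply ref_out; [left; reflexivity|].
      exact CIH.
    + apply act_eq_full.
      * apply nice_prep; [exact nice_Xs| fa].
      * change (nice (prepend [i2;k2;p2;i1;k1;p1;o2;i2;k2;p2] Ys)). apply nice_prep; [exact nice_Ys| fa].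
      * intros a Ha. change (occurs a (prepend [i2;k2;p2;o2] Xs)). apply all_X; exact Ha.
      * intros a Ha. change (occurs a (prepend [i2;k2;p2;i1;k1;p1;o2;i2;k2;p2] Ys)). apply all_Y; exact Ha.
  - apply act_eq_full.
    + exact nice_Xs.
    + change (nice (prepend [i1;k1;p1;i2;k2;p2] Ys)). apply nice_prep; [exact nice_Ys| fa].
    + intros a Ha. change (occurs a (prepend [] Xs)). apply all_X; exact Ha.
    + intros a Ha. change (occurs a (prepend [i1;k1;p1;i2;k2;p2] Ys)). apply all_Y; exact Ha.
Qed.

Lemma ref_main (Hd : src <> sk) : refine tstar Ys.
Proof.
  unfold tstar. rewrite Ys_unf. simpl.
  apply ref_out; [left; reflexivity|].
  exact (refS1 Hd).
Qed.

Ltac tof := repeat first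
  [ eapply to_bra; [apply unf_bra | constructor; [split; [reflexivity|] | constructor]]
  | eapply to_sel; [apply unf_sel | constructor; [split; [reflexivity|] | constructor]] ].

Definition bodyX : stype P L :=
    (inp src b1 (inp sk b1 (out sk b1 (out src b1
    (inp src b2 (inp sk b2 (out sk b2 (out src b2 (@SVar P L 0))))))))).

Lemma tree_X : treeof (SMu 0 bodyX) Xs.
Proof.
  cofix CIH. rewrite Xs_unf. simpl.
  eapply to_bra; [apply unf_mu; simpl; apply unf_bra|].
  constructor; [split; [reflexivity|] | constructor].
  simpl. unfold inp, out. tof. exact CIH.
Qed.

Lemma tree_Y : treeof (T_ctl src sk b1 b2) Ys.
Proof.
  cofix CIH. rewrite Ys_unf. simpl.
  eapply to_sel; [apply unf_mu; simpl; apply unf_sel|].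
  constructor; [split; [reflexivity|] | constructor].
  simpl. unfold inp, out. tof. exact CIH.
Qed.

Lemma tree_star : treeof (T_ctl_star src sk b1 b2) tstar.
Proof.
  unfold tstar, T_ctl_star. unfold out at 1 2. tof. exact tree_X.
Qed.

End Proof.

Theorem proposition6p1 (P L : Type) (src sk : P) (b1 b2 : L) :
  src <> sk ->
  stype_sub (T_ctl_star src sk b1 b2) (T_ctl src sk b1 b2).
Proof.
  intro Hd. eexists _, _.
  split; [apply tree_star|]. split; [apply tree_Y|].
  intros U HU V HV. eexists _, _. split; [|split].
  - apply so_si with (src:=src) (sk:=sk); [apply nice_tstar | exact HU].
  - apply si_so with (src:=src) (sk:=sk); [apply nice_Ys | exact HV].
  - apply ref_main; exact Hd.
Qed.
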